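(* In the category of pointed Frölicher spaces, let $A\subseteq X$ be a subspace containing the basepoint such that $(X,A)$ is an SNDR pair, let $i:A\hookrightarrow X$ be the inclusion and $p:X\to X/A$ the quotient map. Then the sequence $A\xrightarrow{i}X\xrightarrow{p}X/A$ is right exact: for every pointed Frölicher space $W$ the sequence of pointed sets $[X/A,W]\xrightarrow{p^*}[X,W]\xrightarrow{i^*}[A,W]$ is exact, i.e. $\operatorname{im}p^*=(i^* )^{-1}(\ast)$.
   Context: A Frölicher space is a triple $(X,\mathcal C_X,\mathcal F_X)$ with $\mathcal C_X\subseteq X^{\mathbb R}$, $\mathcal F_X\subseteq\mathbb R^X$, such that $\mathcal F_X=\{f\mid f\circ c\in C^\infty(\mathbb R,\mathbb R)\ \forall c\in\mathcal C_X\}$ and $\mathcal C_X=\{c\mid f\circ c\in C^\infty(\mathbb R,\mathbb R)\ \forall f\in\mathcal F_X\}$. Smooth maps: $g\circ\varphi\in\mathcal F_X$ for all $g\in\mathcal F_Y$. Subspaces carry the initial structure, products the structure generated by $f\circ\pi_i$, quotients the final structure. $I$ is $[0,1]$ with the subspace structure from $\mathbb R$; $\mathbf I$ is $[0,1]$ with the structure generated by those structure functions of $I$ that are constant on $[0,\epsilon)$ and on $(1-\epsilon,1]$ for some $0<\epsilon<1/4$. Pointed Frölicher spaces have a distinguished basepoint; maps preserve basepoints. For pointed $X,W$, $[X,W]$ is the set of classes of basepoint-preserving smooth maps modulo pointed smooth homotopy (smooth $H:I\times X\to W$ with $H(t,x_0)=w_0$ for all $t$), pointed by the class of the constant map; $g^*$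 denotes precomposition with $g$. FCIP: For a smooth $i:A\to X$ and a structure curve $x:\mathbb R\to X$ let $\Lambda(x,i)$ be the set of $s_*\in x^{-1}(i(A))$ that are limits of sequences $s_n\in x^{-1}(X\setminus i(A))$. A structure function $g$ on $\mathbf I\times X$ has the FCIP w.r.t. $i$ if $g\circ c$ is $C^\infty$ for every map $c=(t,x):\mathbb R\to[0,1]\times X$ with $x$ a structure curve and, for every $\epsilon>0$, $t$ $C^\infty$ on every open interval disjoint from $\bigcup_{s_*\in\Lambda(x,i)}[s_*-\epsilon,s_*+\epsilon]$; a map $g:\mathbf I\times X\to Z$ has the FCIP if $h\circ g$ does for all $h\in\mathcal F_Z$. SNDR pair: $(X,A)$ is an SNDR pair if there are a smooth $u:X\to\mathbf I$ with $u^{-1}(0)=A$ and a smooth $H:\mathbf I\times X\to X$ with the FCIP w.r.t. $i$, $H(0,x)=x$, $H(t,a)=a$ for $a\in A$, and $H(1,x)\in A$ whenever $u(x)<1$. *)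

(* Defs.v *)
From Stdlib Require Import Reals Relations.
Open Scope R_scope.

Definition smooth (f : R -> R) : Prop :=
  exists D : nat -> R -> R, D O = f /\
    forall n x, derivable_pt_lim (D n) x (D (S n) x).

Definition smooth_on (U : R -> Prop) (f : R -> R) : Prop :=
  exists D : nat -> R -> R, (forall x, U x -> D O x = f x) /\
    forall n x, U x -> derivable_pt_lim (D n) x (D (S n) x).

Record Frol := {
  car :> Type;
  crv : (R -> car) -> Prop;
  fns : (car -> R) -> Prop;
  fns_sat : forall f, fns f <-> (forall c, crv c -> smooth (fun s => f (c s)));
  crv_sat : forall c, crv c <-> (forall f, fns f -> smooth (fun s => f (c s)))
}.

Definition fns_of {X : Type} (C : (R -> X) -> Prop) (f : X -> R) : Prop :=
  forall c, C c -> smooth (fun s => f (c s)).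
Definition crv_of {X : Type} (F : (X -> R) -> Prop) (c : R -> X) : Prop :=
  forall f, F f -> smooth (fun s => f (c s)).

Lemma gen_crv_fns_sat (X : Type) (C0 : (R -> X) -> Prop) :
  forall f, fns_of C0 f <-> (forall c, crv_of (fns_of C0) c -> smooth (fun s => f (c s))).
Proof.
  intros f; split.
  - intros Hf c Hc; apply Hc; exact Hf.
  - intros H c Hc; apply H; intros g Hg; apply Hg; exact Hc.
Qed.

Lemma gen_crv_crv_sat (X : Type) (C0 : (R -> X) -> Prop) :
  forall c, crv_of (fns_of C0) c <-> (forall f, fns_of C0 f -> smooth (fun s => f (c s))).
Proof. intros c; tauto. Qed.

Lemma gen_fns_fns_sat (X : Type) (F0 : (X -> R) -> Prop) :
  forall f, fns_of (crv_of F0) f <-> (forall c, crv_of F0 c -> smooth (fun s => f (c s))).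
Proof. intros f; tauto. Qed.

Lemma gen_fns_crv_sat (X : Type) (F0 : (X -> R) -> Prop) :
  forall c, crv_of F0 c <-> (forall f, fns_of (crv_of F0) f -> smooth (fun s => f (c s))).
Proof.
  intros c; split.
  - intros Hc f Hf; apply Hf; exact Hc.
  - intros H f Hf; apply H; intros d Hd; apply Hd; exact Hf.
Qed.

Definition gen_by_crv (X : Type) (C0 : (R -> X) -> Prop) : Frol :=
  {| car := X; crv := crv_of (fns_of C0); fns := fns_of C0;
     fns_sat := gen_crv_fns_sat X C0; crv_sat := gen_crv_crv_sat X C0 |}.

Definition gen_by_fns (X : Type) (F0 : (X -> R) -> Prop) : Frol :=
  {| car := X; crv := crv_of F0; fns := fns_of (crv_of F0);
     fns_sat := gen_fns_fns_sat X F0; crv_sat := gen_fns_crv_sat X F0 |}.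

Definition smooth_map (X Y : Frol) (phi : X -> Y) : Prop :=
  forall g, fns Y g -> fns X (fun x => g (phi x)).

(** The reals with their standard structure (curves = C^infty curves). *)
Definition Rfrol : Frol := gen_by_fns R (fun f => forall x, f x = x).

Definition Sub (X : Frol) (P : X -> Prop) : Frol :=
  gen_by_fns {x : X | P x}
    (fun g => exists f, fns X f /\ g = (fun a => f (proj1_sig a))).

Definition Prod (X Y : Frol) : Frol :=
  gen_by_fns (car X * car Y)
    (fun g => (exists f, fns X f /\ g = (fun p => f (fst p))) \/
              (exists f, fns Y f /\ g = (fun p => f (snd p)))).

(** Quotient X/A: collapse A to a point; final structure w.r.t. the projection. *)
Definition qcls {X : Type} (A : X -> Prop) (x : X) : X -> Prop :=
  fun y => x = y \/ (A x /\ A y).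
Definition Qcar (X : Type) (A : X -> Prop) : Type :=
  {S : X -> Prop | exists x, S = qcls A x}.
Definition qproj {X : Type} (A : X -> Prop) (x : X) : Qcar X A :=
  exist _ (qcls A x) (ex_intro _ x eq_refl).
Definition Quot (X : Frol) (A : X -> Prop) : Frol :=
  gen_by_crv (Qcar X A)
    (fun c => exists c0, crv X c0 /\ c = (fun s => qproj A (c0 s))).

Definition I : Frol := Sub Rfrol (fun t : R => 0 <= t <= 1).
Definition boldI : Frol :=
  gen_by_fns (car I)
    (fun g => fns I g /\ exists eps, 0 < eps < 1/4 /\ exists a b,
       forall t : car I, (proj1_sig t < eps -> g t = a) /\
                         (1 - eps < proj1_sig t -> g t = b)).

Lemma i0_proof : 0 <= 0 <= 1. Proof. split; [apply Rle_refl | apply Rle_0_1]. Qed.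
Lemma i1_proof : 0 <= 1 <= 1. Proof. split; [apply Rle_0_1 | apply Rle_refl]. Qed.
Definition i0 : car I := exist (fun t : R => 0 <= t <= 1) 0 i0_proof.
Definition i1 : car I := exist (fun t : R => 0 <= t <= 1) 1 i1_proof.

Definition Lambda {X A : Type} (i : A -> X) (x : R -> X) (s0 : R) : Prop :=
  (exists a, i a = x s0) /\
  exists sn : nat -> R, (forall n, ~ (exists a, i a = x (sn n))) /\ Un_cv sn s0.

Definition fcip_fn (X A : Frol) (i : A -> X) (g : car I * car X -> R) : Prop :=
  forall (t : R -> car I) (x : R -> car X), crv X x ->
    (forall eps, eps > 0 -> forall a b, a < b ->
       (forall s, a < s < b -> forall s0, Lambda i x s0 ->
          ~ (s0 - eps <= s <= s0 + eps)) ->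
       smooth_on (fun s => a < s < b) (fun s => proj1_sig (t s))) ->
    smooth (fun s => g (t s, x s)).

Definition fcip_map (X A : Frol) (i : A -> X) (Z : Frol)
    (g : car I * car X -> car Z) : Prop :=
  forall h, fns Z h -> fcip_fn X A i (fun p => h (g p)).

Definition SNDR (X : Frol) (A : X -> Prop) : Prop :=
  exists u : car X -> car boldI, smooth_map X boldI u /\
    (forall x, proj1_sig (u x) = 0 <-> A x) /\
  exists H : car (Prod boldI X) -> car X,
    smooth_map (Prod boldI X) X H /\
    fcip_map X (Sub X A) (@proj1_sig _ A) X H /\
    (forall x, H (i0, x) = x) /\
    (forall t a, A a -> H (t, a) = a) /\
    (forall x, proj1_sig (u x) < 1 -> A (H (i1, x))).

Record PFrol := { sp :> Frol; bp : car sp }.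

Definition pmap (X W : PFrol) (f : car X -> car W) : Prop :=
  smooth_map X W f /\ f (bp X) = bp W.

Definition phomotopic (X W : PFrol) (f g : car X -> car W) : Prop :=
  exists H : car (Prod I X) -> car W, smooth_map (Prod I X) W H /\
    (forall x, H (i0, x) = f x) /\ (forall x, H (i1, x) = g x) /\
    (forall t, H (t, bp X) = bp W).

(** Equality in [X,W]: the equivalence relation generated by pointed smooth homotopy. *)
Definition htpy_eq (X W : PFrol) : relation (car X -> car W) :=
  clos_refl_sym_trans _ (phomotopic X W).

Definition PSub (X : PFrol) (A : car X -> Prop) (hA : A (bp X)) : PFrol :=
  {| sp := Sub X A; bp := exist A (bp X) hA |}.
Definition PQuot (X : PFrol) (A : car X -> Prop) : PFrol :=
  {| sp := Quot X A; bp := qproj A (bp X) |}.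

(* Main.v *)
Require Import Defs.
From Stdlib Require Import Reals Relations Lra Lia ClassicalEpsilon FunctionalExtensionality PropExtensionality ProofIrrelevance.
Open Scope R_scope.

Fixpoint Cn (n:nat) (f:R->R) : Prop :=
  match n with O => True | S m => exists f', (forall x, derivable_pt_lim f x (f' x)) /\ Cn m f' end.
Definition sm f := forall n, Cn n f.

Lemma dpl_local f g x l : (exists d, 0 < d /\ forall y, Rabs (y - x) < d -> f y = g y) ->
  derivable_pt_lim g x l -> derivable_pt_lim f x l.
Proof.
  intros [d [Hd Hfg]] Hg eps Heps.
  destruct (Hg eps Heps) as [del Hdel].
  assert (Hm : 0 < Rmin d del) by (apply Rmin_pos; [lra| apply cond_pos]).
  exists (mkposreal _ Hm). intros h Hh0 Hh. simpl in Hh.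
  rewrite (Hfg (x+h)).
  2:{ replace (x+h-x) with h by ring. eapply Rlt_le_trans; [apply Hh| apply Rmin_l]. }
  rewrite (Hfg x).
  2:{ rewrite Rminus_diag, Rabs_R0; lra. }
  apply Hdel; auto. eapply Rlt_le_trans; [apply Hh| apply Rmin_r].
Qed.

Lemma dpl_eq f g x l l' : (forall y, f y = g y) -> l = l' ->
  derivable_pt_lim g x l' -> derivable_pt_lim f x l.
Proof.
  intros H -> Hg. apply dpl_local with g; auto. exists 1; split; [lra|auto].
Qed.

Lemma Cn_ext : forall n f g, (forall x, f x = g x) -> Cn n f -> Cn n g.
Proof.
  induction n; simpl; auto.
  intros f g Hfg [f' [Hd Hc]]. exists f'; split; auto.
  intros x. apply dpl_eq with f (f' x); auto.
Qed.

Lemma Cn_pred : forall n f, Cn (S n) f -> Cn n f.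
Proof.
  induction n; simpl; auto.
  intros f [f' [Hd Hc]]. exists f'; split; auto.
Qed.

Lemma Cn_const : forall n c, Cn n (fun _ => c).
Proof.
  induction n; simpl; auto. intros c. exists (fun _ => 0). split; auto.
  intros x. exact (derivable_pt_lim_const c x).
Qed.

Lemma Cn_id : forall n, Cn n (fun x => x).
Proof.
  destruct n; simpl; auto. exists (fun _ => 1). split. 
  - intros x. exact (derivable_pt_lim_id x).
  - apply Cn_const.
Qed.

Lemma Cn_plus : forall n f g, Cn n f -> Cn n g -> Cn n (fun x => f x + g x).
Proof.
  induction n; simpl; auto.
  intros f g [f' [Hf Cf]] [g' [Hg Cg]]. exists (fun x => f' x + g' x). split; auto.
  intros x. exact (derivable_pt_lim_plus f g x _ _ (Hf x) (Hg x)).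
Qed.

Lemma Cn_mult : forall n f g, Cn n f -> Cn n g -> Cn n (fun x => f x * g x).
Proof.
  induction n; simpl; auto.
  intros f g [f' [Hf Cf]] [g' [Hg Cg]].
  exists (fun x => f' x * g x + f x * g' x). split.
  - intros x. exact (derivable_pt_lim_mult f g x _ _ (Hf x) (Hg x)).
  - apply Cn_plus; apply IHn; auto; apply Cn_pred; simpl; eauto.
Qed.

Lemma Cn_scal : forall n c f, Cn n f -> Cn n (fun x => c * f x).
Proof. intros. apply (Cn_mult n (fun _ => c) f); auto; apply Cn_const. Qed.

Lemma sm_const c : sm (fun _ => c). Proof. intro n; apply Cn_const. Qed.
Lemma sm_id : sm (fun x => x). Proof. intro n; apply Cn_id. Qed.
Lemma sm_plus f g : sm f -> sm g -> sm (fun x => f x + g x).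
Proof. intros F G n; apply Cn_plus; auto. Qed.
Lemma sm_mult f g : sm f -> sm g -> sm (fun x => f x * g x).
Proof. intros F G n; apply Cn_mult; auto. Qed.
Lemma sm_ext f g : (forall x, f x = g x) -> sm f -> sm g.
Proof. intros E F n; apply Cn_ext with f; auto. Qed.
Lemma sm_opp f : sm f -> sm (fun x => - f x).
Proof. intros F. apply sm_ext with (fun x => (-1) * f x). intros; ring.
  apply sm_mult; auto; apply sm_const. Qed.
Lemma sm_minus f g : sm f -> sm g -> sm (fun x => f x - g x).
Proof. intros F G. apply sm_ext with (fun x => f x + - g x). intros; ring.
  apply sm_plus; auto; apply sm_opp; auto. Qed.

Lemma sm_der f : sm f -> exists f', (forall x, derivable_pt_lim f x (f' x)) /\ sm f'.
Proof.
  intros F. destruct (F 1%nat) as [f0 [H0 _]]. exists f0; split; auto.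
  intros n. destruct (F (S n)) as [g [Hg Cg]].
  apply Cn_ext with g; auto. intros x. eapply uniqueness_limite; eauto.
Qed.

Lemma sm_comp f g : sm f -> sm g -> sm (fun x => f (g x)).
Proof.
  intros F G n. revert f g F G. induction n; simpl; auto. intros f g F G.
  destruct (sm_der f F) as [f' [Hf F']]. destruct (sm_der g G) as [g' [Hg G']].
  exists (fun x => f' (g x) * g' x). split.
  - intros x. exact (derivable_pt_lim_comp g f x _ _ (Hg x) (Hf (g x))).
  - apply (Cn_mult n (fun x => f' (g x)) g'); auto.
Qed.

Lemma sm_inv h : sm h -> (forall x, 0 < h x) -> sm (fun x => / h x).
Proof.
  intros Hs Hp n. revert h Hs Hp. induction n; simpl; auto. intros h Hs Hp.
  destruct (sm_der h Hs) as [h' [Hh H']].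
  exists (fun x => - h' x * (/ h x * / h x)). split.
  - intros x. assert (hx : h x <> 0) by (specialize (Hp x); lra).
    eapply dpl_eq; [| | exact (derivable_pt_lim_div (fct_cte 1) h x _ _ (derivable_pt_lim_const 1 x) (Hh x) hx)].
    + intros y. unfold fct_cte, div_fct. lra.
    + unfold fct_cte, Rsqr. field; auto.
  - apply (Cn_mult n (fun x => - h' x) (fun x => / h x * / h x)).
    + apply sm_opp; auto.
    + apply (Cn_mult n (fun x => / h x) (fun x => / h x)); apply IHn; auto.
Qed.

Definition der (f : R -> R) (x : R) : R := epsilon (inhabits 0) (fun l => derivable_pt_lim f x l).
Lemma der_spec f x l : derivable_pt_lim f x l -> derivable_pt_lim f x (der f x) /\ der f x = l.
Proof.
  intros H. assert (H' : derivable_pt_lim f x (der f x)) by (unfold der; apply epsilon_spec; eauto).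
  split; auto. eapply uniqueness_limite; eauto.
Qed.

Definition locsm f := forall x, exists d, 0 < d /\ exists g, sm g /\ forall y, Rabs (y - x) < d -> f y = g y.

Lemma locsm_Cn : forall n f, locsm f -> Cn n f.
Proof.
  induction n; simpl; auto. intros f L. exists (der f). split.
  - intros x. destruct (L x) as [d [Hd [g [G Hg]]]]. destruct (sm_der g G) as [g' [Hg' _]].
    apply (der_spec f x (g' x)). apply dpl_local with g; eauto.
  - apply IHn. intros x. destruct (L x) as [d [Hd [g [G Hg]]]]. destruct (sm_der g G) as [g' [Hg' G']].
    exists d; split; auto. exists g'; split; auto. intros y Hy.
    apply (der_spec f y (g' y)). apply dpl_local with g; auto.
    exists (d - Rabs (y - x)); split; [lra|]. intros z Hz. apply Hg.
    replace (z - x) with ((z - y) + (y - x)) by ring.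
    eapply Rle_lt_trans; [apply Rabs_triang| lra].
Qed.

Lemma sm_local f : locsm f -> sm f.
Proof. intros L n; apply locsm_Cn; auto. Qed.

Lemma smooth_sm f : smooth f -> sm f.
Proof.
  intros [D [HD0 HD]]. assert (forall n k, Cn n (D k)).
  { induction n; simpl; auto. intros k. exists (D (S k)); split; auto. }
  intros n. apply Cn_ext with (D O); auto. rewrite HD0; auto.
Qed.

Lemma sm_smooth f : sm f -> smooth f.
Proof.
  intros F. exists (fun n => Nat.iter n der f).
  assert (Hs : forall n, sm (Nat.iter n der f)).
  { induction n; simpl; auto. destruct (sm_der _ IHn) as [g' [Hg G']].
    apply sm_ext with g'; auto. intros x; symmetry; apply (der_spec _ x (g' x)); auto. }
  split; auto. intros n x. simpl. destruct (sm_der _ (Hs n)) as [g' [Hg _]].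
  apply (der_spec _ x (g' x)); auto.
Qed.

Lemma smooth_iff f : smooth f <-> sm f.
Proof. split; [apply smooth_sm|apply sm_smooth]. Qed.

Lemma sm_pos_nbhd m s0 : sm m -> 0 < m s0 -> exists d, 0 < d /\ forall s, Rabs (s - s0) < d -> 0 < m s.
Proof.
  intros M Hp. destruct (M 1%nat) as [m' [Hm _]].
  assert (C : continuity_pt m s0) by (apply derivable_continuous_pt; exists (m' s0); apply Hm).
  unfold continuity_pt, continue_in, limit1_in, limit_in in C.
  assert (Hpos : m s0 / 2 > 0) by lra. destruct (C _ Hpos) as [a [Ha Hc]].
  exists a; split; auto. intros s Hs.
  destruct (Req_dec s s0) as [->|Hne]; auto.
  assert (Hd : dist R_met (m s) (m s0) < m s0 / 2).
  { apply Hc; split; [split; [exact Logic.I| auto] | exact Hs]. }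
  simpl in Hd. unfold R_dist in Hd. apply Rabs_def2 in Hd. lra.
Qed.

Definition gk (k : nat) (x : R) : R := if Rlt_dec 0 x then (/ x) ^ k * exp (- / x) else 0.

Lemma exp_pow_nat : forall n z, exp (INR n * z) = exp z ^ n.
Proof.
  induction n; intros z. simpl. rewrite Rmult_0_l, exp_0; auto.
  rewrite S_INR. replace ((INR n + 1) * z) with (INR n * z + z) by ring.
  rewrite exp_plus, IHn. simpl. ring.
Qed.

Lemma gk_bound k x : 0 < x -> (/ x) ^ k * exp (- / x) <= INR (S k) ^ (S k) * x.
Proof.
  intros Hx. set (y := / x). assert (Hy : 0 < y) by (apply Rinv_0_lt_compat; auto).
  set (m := INR (S k)). assert (Hm : 0 < m) by (apply lt_0_INR; lia).
  assert (He : (y / m) ^ (S k) <= exp y).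
  { assert (E : y = m * (y / m)) by (field; lra). rewrite E at 2. unfold m at 2.
    rewrite exp_pow_nat. apply pow_incr. split.
    - apply Rlt_le, Rdiv_lt_0_compat; auto.
    - assert (0 < y/m) by (apply Rdiv_lt_0_compat; auto).
      pose proof (exp_ineq1 (y/m)). lra. }
  assert (Hp : 0 < (y / m) ^ S k) by (apply pow_lt, Rdiv_lt_0_compat; auto).
  rewrite exp_Ropp.
  apply Rle_trans with (y ^ k * / ((y / m) ^ S k)).
  - apply Rmult_le_compat_l. apply pow_le; lra.
    apply Rinv_le_contravar; auto.
  - right. unfold y. replace x with (/ y) by (unfold y; rewrite Rinv_inv; auto).
    rewrite Rinv_inv. fold y. simpl. unfold Rdiv. rewrite Rpow_mult_distr, pow_inv.
    assert (y ^ k <> 0) by (apply pow_nonzero; lra).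
    assert (m ^ k <> 0) by (apply pow_nonzero; lra).
    field. repeat split; lra.
Qed.

Lemma dpl_Rinv x : x <> 0 -> derivable_pt_lim (fun y => / y) x (- / (x * x)).
Proof.
  intros Hx. eapply dpl_eq; [| | exact (derivable_pt_lim_div (fct_cte 1) id x _ _ (derivable_pt_lim_const 1 x) (derivable_pt_lim_id x) Hx)].
  - intros y. unfold fct_cte, div_fct, id. lra.
  - unfold fct_cte, id, Rsqr. field; auto.
Qed.

Lemma gk_pos k x : 0 < x -> gk k x = (/ x) ^ k * exp (- / x).
Proof. intros H. unfold gk. destruct (Rlt_dec 0 x); auto; lra. Qed.
Lemma gk_npos k x : x <= 0 -> gk k x = 0.
Proof. intros H. unfold gk. destruct (Rlt_dec 0 x); auto; lra. Qed.

Lemma gk_der k x : derivable_pt_lim (gk k) x (- INR k * gk (S k) x + gk (S (S k)) x).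
Proof.
  destruct (Rlt_le_dec 0 x) as [Hx|Hx].
  - apply dpl_local with (fun y => (/ y) ^ k * exp (- / y)).
    { exists x; split; auto. intros y Hy. apply gk_pos. apply Rabs_def2 in Hy. lra. }
    assert (Hx0 : x <> 0) by lra.
    pose proof (derivable_pt_lim_comp _ _ x _ _ (dpl_Rinv x Hx0) (derivable_pt_lim_pow (/ x) k)) as D1.
    assert (D2 : derivable_pt_lim (fun y => - / y) x (/ (x * x))).
    { eapply dpl_eq; [| | exact (derivable_pt_lim_opp _ x _ (dpl_Rinv x Hx0))].
      intros; reflexivity. field; auto. }
    pose proof (derivable_pt_lim_comp _ _ x _ _ D2 (derivable_pt_lim_exp (- / x))) as D3.
    eapply dpl_eq; [| | exact (derivable_pt_lim_mult _ _ x _ _ D1 D3)].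
    + intros y. reflexivity.
    + rewrite !gk_pos by auto. unfold comp.
      destruct k as [|j]; [simpl; field; auto|].
      rewrite S_INR. simpl pow. simpl Nat.pred. field. auto.
  - destruct Hx as [Hx|Hx].
    + apply dpl_local with (fun _ => 0).
      { exists (- x); split; [lra|]. intros y Hy. apply gk_npos. apply Rabs_def2 in Hy. lra. }
      rewrite !gk_npos by lra. replace (- INR k * 0 + 0) with 0 by ring.
      exact (derivable_pt_lim_const 0 x).
    + subst x. rewrite !gk_npos by lra. replace (- INR k * 0 + 0) with 0 by ring.
      intros eps Heps. set (C := INR (S (S k)) ^ (S (S k))).
      assert (HC : 0 < C) by (apply pow_lt, lt_0_INR; lia).
      assert (Hd : 0 < eps / (C + 1)) by (apply Rdiv_lt_0_compat; lra).
      exists (mkposreal _ Hd). intros h Hh0 Hh. simpl in Hh.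
      rewrite Rplus_0_l, (gk_npos k 0) by lra. rewrite Rminus_0_r, Rminus_0_r.
      destruct (Rlt_le_dec 0 h) as [Hp|Hp].
      * rewrite gk_pos by auto.
        replace ((/ h) ^ k * exp (- / h) / h) with ((/ h) ^ (S k) * exp (- / h)) by (simpl; field; lra).
        pose proof (gk_bound (S k) h Hp). fold C in H.
        assert (0 <= (/ h) ^ S k * exp (- / h)).
        { apply Rmult_le_pos; [apply pow_le; left; apply Rinv_0_lt_compat; auto| left; apply exp_pos]. }
        rewrite Rabs_pos_eq by auto. rewrite Rabs_pos_eq in Hh by lra.
        apply Rle_lt_trans with (C * h); auto.
        apply Rlt_le_trans with (C * (eps / (C+1))). apply Rmult_lt_compat_l; auto.
        unfold Rdiv. rewrite <- Rmult_assoc. apply Rmult_le_reg_r with (C+1); [lra|].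
        rewrite Rmult_assoc, Rinv_l by lra. nra.
      * rewrite gk_npos by auto. unfold Rdiv. rewrite Rmult_0_l, Rabs_R0. auto.
Qed.

Lemma gk_sm : forall n k, Cn n (gk k).
Proof.
  induction n; simpl; auto. intros k.
  exists (fun x => - INR k * gk (S k) x + gk (S (S k)) x). split.
  - apply gk_der.
  - apply Cn_plus; auto. apply Cn_scal; auto.
Qed.

Definition psi x := gk 0 x.
Lemma psi_sm : sm psi. Proof. intros n; apply gk_sm. Qed.
Lemma psi_pos x : 0 < x -> 0 < psi x.
Proof. intros H. unfold psi. rewrite gk_pos by auto. simpl. rewrite Rmult_1_l. apply exp_pos. Qed.
Lemma psi_nn x : 0 <= psi x.
Proof. destruct (Rlt_le_dec 0 x). left; apply psi_pos; auto. unfold psi; rewrite gk_npos; lra. Qed.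
Lemma psi_z x : x <= 0 -> psi x = 0.
Proof. intros; unfold psi; apply gk_npos; auto. Qed.

Definition sig0 x := psi x * / (psi x + psi (1 - x)).
Lemma den_pos x : 0 < psi x + psi (1 - x).
Proof.
  destruct (Rlt_le_dec 0 x). pose proof (psi_pos x r); pose proof (psi_nn (1-x)); lra.
  pose proof (psi_pos (1-x) ltac:(lra)); pose proof (psi_nn x); lra.
Qed.
Lemma sig0_sm : sm sig0.
Proof.
  apply sm_mult. apply psi_sm. apply sm_inv; [|apply den_pos].
  apply sm_plus. apply psi_sm. apply (sm_comp psi (fun x => 1 - x)). apply psi_sm.
  apply sm_minus; [apply sm_const| apply sm_id].
Qed.
Lemma sig0_range x : 0 <= sig0 x <= 1.
Proof.
  unfold sig0. pose proof (den_pos x). pose proof (psi_nn x). pose proof (psi_nn (1-x)).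
  split. apply Rmult_le_pos; auto; left; apply Rinv_0_lt_compat; auto.
  apply Rmult_le_reg_r with (psi x + psi (1 - x)); auto.
  rewrite Rmult_assoc, Rinv_l by lra. lra.
Qed.
Lemma sig0_0 x : x <= 0 -> sig0 x = 0.
Proof. intros H. unfold sig0. rewrite psi_z by auto. ring. Qed.
Lemma sig0_1 x : 1 <= x -> sig0 x = 1.
Proof. intros H. unfold sig0. rewrite (psi_z (1 - x)) by lra. rewrite Rplus_0_r. field.
  apply Rgt_not_eq, psi_pos; lra. Qed.

Definition cut a b z := sig0 ((z - a) / (b - a)).
Lemma cut_sm a b : sm (cut a b).
Proof.
  unfold cut. apply (sm_comp sig0 (fun z => (z - a) / (b - a))). apply sig0_sm.
  unfold Rdiv. apply (sm_mult (fun z => z - a)). apply sm_minus; [apply sm_id|apply sm_const]. apply sm_const.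
Qed.
Lemma cut_range a b z : 0 <= cut a b z <= 1.
Proof. apply sig0_range. Qed.
Lemma cut_lo a b z : a < b -> z <= a -> cut a b z = 0.
Proof. intros. unfold cut. apply sig0_0. unfold Rdiv. assert (0 < / (b - a)) by (apply Rinv_0_lt_compat; lra). nra. Qed.
Lemma cut_hi a b z : a < b -> b <= z -> cut a b z = 1.
Proof. intros. unfold cut. apply sig0_1. apply Rmult_le_reg_r with (b - a); [lra|].
  unfold Rdiv. rewrite Rmult_assoc, Rinv_l by lra. lra. Qed.

Lemma map_crv (X Y : Frol) (phi : X -> Y) c : smooth_map X Y phi -> crv X c -> crv Y (fun s => phi (c s)).
Proof. intros Hp Hc. apply (proj2 (crv_sat Y _)). intros g Hg.
  exact (proj1 (fns_sat X _) (Hp g Hg) c Hc). Qed.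

Lemma crv_map (X Y : Frol) (phi : X -> Y) : (forall c, crv X c -> crv Y (fun s => phi (c s))) -> smooth_map X Y phi.
Proof. intros H g Hg. apply (proj2 (fns_sat X _)). intros c Hc.
  exact (proj1 (crv_sat Y _) (H c Hc) g Hg). Qed.

Lemma crv_reparam (X : Frol) c sg : crv X c -> sm sg -> crv X (fun s => c (sg s)).
Proof. intros Hc Hs. apply (proj2 (crv_sat X _)). intros f Hf.
  pose proof (proj1 (crv_sat X _) Hc f Hf) as H. apply smooth_iff in H. apply smooth_iff.
  exact (sm_comp _ _ H Hs). Qed.

Lemma crv_fns (X : Frol) c f : crv X c -> fns X f -> sm (fun s => f (c s)).
Proof. intros Hc Hf. apply smooth_iff. exact (proj1 (crv_sat X _) Hc f Hf). Qed.

Lemma crv_R c : crv Rfrol c <-> sm c.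
Proof. simpl. unfold crv_of. split.
 - intros H. apply smooth_iff. apply (H (fun x => x)); auto.
 - intros H f Hf. apply smooth_iff. apply sm_ext with c; [intros; rewrite Hf; auto|auto]. Qed.

Lemma crv_Sub (X:Frol) (P : X -> Prop) c : crv (Sub X P) c <-> crv X (fun s => proj1_sig (c s)).
Proof. simpl. unfold crv_of. split.
 - intros H. apply (proj2 (crv_sat X _)). intros f Hf. apply (H (fun a => f (proj1_sig a))). eauto.
 - intros H g [f [Hf ->]]. exact (proj1 (crv_sat X _) H f Hf). Qed.

Lemma crv_Prod (X Y:Frol) c : crv (Prod X Y) c <-> crv X (fun s => fst (c s)) /\ crv Y (fun s => snd (c s)).
Proof. simpl. unfold crv_of. split.
 - intros H. split; apply (proj2 (crv_sat _ _)); intros f Hf.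
   + apply (H (fun p => f (fst p))). left; eauto.
   + apply (H (fun p => f (snd p))). right; eauto.
 - intros [H1 H2] g [[f [Hf ->]]|[f [Hf ->]]].
   + exact (proj1 (crv_sat X _) H1 f Hf).
   + exact (proj1 (crv_sat Y _) H2 f Hf). Qed.

Lemma crv_I c : crv I c <-> sm (fun s => proj1_sig (c s)).
Proof. unfold I. rewrite crv_Sub. apply crv_R. Qed.

Lemma crv_bI c : crv I c -> crv boldI c.
Proof. intros H. change (crv_of (fun g => fns I g /\ exists eps, 0 < eps < 1/4 /\ exists a b,
       forall t : car I, (proj1_sig t < eps -> g t = a) /\ (1 - eps < proj1_sig t -> g t = b)) c).
  intros g [Hg _]. exact (proj1 (fns_sat I _) Hg c H). Qed.

Definition flat (phi : R -> R) := sm phi /\ exists a b, (forall t, t < 1/5 -> phi t = a) /\ (forall t, 4/5 < t -> phi t = b).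

Lemma fns_bI phi : flat phi -> fns boldI (fun t => phi (proj1_sig t)).
Proof. intros [Hs [a [b [Ha Hb]]]]. change (fns_of (crv_of (fun g => fns I g /\ exists eps, 0 < eps < 1/4 /\ exists a b,
       forall t : car I, (proj1_sig t < eps -> g t = a) /\ (1 - eps < proj1_sig t -> g t = b))) (fun t : car I => phi (proj1_sig t))).
  intros c Hc. unfold crv_of in Hc. apply (Hc (fun t => phi (proj1_sig t))). split.
 - apply (proj2 (fns_sat I _)). intros d Hd. apply smooth_iff. apply (sm_comp phi (fun s => proj1_sig (d s))); auto. apply crv_I; auto.
 - exists (1/5). split; [lra|]. exists a, b. intros t; split; intros; [apply Ha | apply Hb]; lra.
Qed.

Lemma flat_cut a b : 1/5 <= a -> a < b -> b <= 4/5 -> flat (cut a b).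
Proof. intros. split. apply cut_sm. exists 0, 1. split; intros; [apply cut_lo|apply cut_hi]; lra. Qed.
Lemma flat_cutc a b : 1/5 <= a -> a < b -> b <= 4/5 -> flat (fun z => 1 - cut a b z).
Proof. intros. split. apply sm_minus; [apply sm_const|apply cut_sm]. exists 1, 0.
  split; intros; [rewrite cut_lo|rewrite cut_hi]; lra. Qed.

Lemma u_sm (X : Frol) (u : X -> car boldI) phi x : smooth_map X boldI u -> flat phi -> crv X x ->
  sm (fun s => phi (proj1_sig (u (x s)))).
Proof. intros Hu Hp Hx. apply (crv_fns X x (fun y => phi (proj1_sig (u y)))); auto.
  apply (Hu (fun t => phi (proj1_sig t))). apply fns_bI; auto. Qed.

Lemma clamp_pf r : 0 <= Rmax 0 (Rmin 1 r) <= 1.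
Proof. split. apply Rmax_l. apply Rmax_lub; [lra| apply Rmin_l]. Qed.
Definition clampI (r : R) : car I := exist (fun t : R => 0 <= t <= 1) _ (clamp_pf r).
Lemma clamp_val r : 0 <= r <= 1 -> proj1_sig (clampI r) = r.
Proof. intros H. simpl. rewrite Rmin_right by lra. rewrite Rmax_right; lra. Qed.

Lemma sig_eq {T} (P : T -> Prop) (a b : {x | P x}) : proj1_sig a = proj1_sig b -> a = b.
Proof. destruct a, b; simpl; intros ->. f_equal; apply proof_irrelevance. Qed.

Lemma clamp_eq r (t : car I) : proj1_sig t = r -> clampI r = t.
Proof. intros H. apply sig_eq. destruct t as [x Hx]. simpl in H. subst. apply clamp_val; auto. Qed.

Lemma crv_clamp tau : sm tau -> (forall s, 0 <= tau s <= 1) -> crv I (fun s => clampI (tau s)).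
Proof. intros Hs Hr. apply crv_I. apply sm_ext with tau; auto. intros; rewrite clamp_val; auto. Qed.

Lemma crv_const (X : Frol) (x : car X) : crv X (fun _ => x).
Proof. apply (proj2 (crv_sat X _)). intros f _. apply smooth_iff, sm_const. Qed.

Lemma prod01 a b : 0 <= a <= 1 -> 0 <= b <= 1 -> 0 <= a * b <= 1.
Proof. intros [] []. split. apply Rmult_le_pos; auto. rewrite <- (Rmult_1_r 1). apply Rmult_le_compat; auto. Qed.

Lemma phom_sym (X W : PFrol) f g : phomotopic X W f g -> phomotopic X W g f.
Proof.
  intros [H [HS [H0 [H1 Hb]]]].
  exists (fun p => H (clampI (1 - proj1_sig (fst p)), snd p)). split; [|split;[|split]].
  - apply crv_map. intros c Hc. apply crv_Prod in Hc as [C1 C2].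
    apply (map_crv _ _ H _ HS). apply crv_Prod. split; simpl; auto.
    apply crv_clamp. apply sm_minus; [apply sm_const| apply crv_I; auto].
    intros s. pose proof (proj2_sig (fst (c s))) as Ht. simpl in Ht. lra.
  - intros x. rewrite (clamp_eq _ i1) by (simpl; ring). apply H1.
  - intros x. rewrite (clamp_eq _ i0) by (simpl; ring). apply H0.
  - intros t. apply Hb.
Qed.

Lemma phom_res (X W : PFrol) A hA f g : phomotopic X W f g ->
  phomotopic (PSub X A hA) W (fun a => f (proj1_sig a)) (fun a => g (proj1_sig a)).
Proof.
  intros [H [HS [H0 [H1 Hb]]]].
  exists (fun p => H (fst p, proj1_sig (snd p))). split; [|split;[|split]].
  - apply crv_map. intros c Hc. apply crv_Prod in Hc as [C1 C2].
    apply (map_crv _ _ H _ HS). apply crv_Prod. split; simpl; auto. apply crv_Sub in C2. exact C2.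
  - intros; apply H0.
  - intros; apply H1.
  - intros t; apply Hb.
Qed.

Lemma htpy_res (X W : PFrol) A hA f g : htpy_eq X W f g ->
  htpy_eq (PSub X A hA) W (fun a => f (proj1_sig a)) (fun a => g (proj1_sig a)).
Proof. induction 1. apply rst_step, phom_res; auto. apply rst_refl. apply rst_sym; auto. eapply rst_trans; eauto. Qed.

Lemma quot_factor (X W : PFrol) A f : pmap X W f -> (forall x, A x -> f x = bp W) ->
  exists g : car (PQuot X A) -> car W, pmap (PQuot X A) W g /\ forall x, g (qproj A x) = f x.
Proof.
  intros [Hf Hfb] HA.
  assert (WD : forall x y, qcls A x = qcls A y -> f x = f y).
  { intros x y E. assert (Hy : qcls A y y) by (left; auto). rewrite <- E in Hy.
    destruct Hy as [->|[Ax Ay]]; auto. rewrite !HA; auto. }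
  exists (fun S : Qcar X A => f (proj1_sig (constructive_indefinite_description _ (proj2_sig S)))).
  assert (Hg : forall x, f (proj1_sig (constructive_indefinite_description _ (proj2_sig (qproj A x)))) = f x).
  { intros x. destruct (constructive_indefinite_description _ _) as [y Hy]. simpl. symmetry. apply WD. exact Hy. }
  split; [split|]; auto.
  - intros h Hh. intros c [c0 [Hc0 ->]].
    replace (fun s => h (f (proj1_sig (constructive_indefinite_description _ (proj2_sig (qproj A (c0 s)))))))
      with (fun s => h (f (c0 s))).
    + exact (proj1 (fns_sat X _) (Hf h Hh) c0 Hc0).
    + apply functional_extensionality; intros s. rewrite Hg; auto.
  - exact (eq_trans (Hg (bp X)) Hfb).
Qed.

Lemma reparam_exists s0 d : 0 < d -> exists sg, sm sg /\ (forall s, Rabs (sg s - s0) < d) /\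
  exists d', 0 < d' /\ forall s, Rabs (s - s0) < d' -> sg s = s.
Proof.
  intros Hd.
  exists (fun s => s0 + (s - s0) * (1 - cut (d*d/16) (d*d/4) ((s - s0) * (s - s0)))).
  assert (Hab : d*d/16 < d*d/4) by nra.
  split; [|split].
  - apply sm_plus; [apply sm_const|]. apply sm_mult.
    + apply sm_minus; [apply sm_id|apply sm_const].
    + apply sm_minus; [apply sm_const|]. apply (sm_comp (cut (d*d/16) (d*d/4)) (fun s => (s - s0) * (s - s0))).
      apply cut_sm. apply sm_mult; apply sm_minus; try apply sm_id; apply sm_const.
  - intros s. replace (s0 + (s - s0) * (1 - cut (d * d / 16) (d * d / 4) ((s - s0) * (s - s0))) - s0)
      with ((s - s0) * (1 - cut (d * d / 16) (d * d / 4) ((s - s0) * (s - s0)))) by ring.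
    set (y := s - s0). pose proof (cut_range (d*d/16) (d*d/4) (y*y)).
    destruct (Rle_lt_dec (d*d/4) (y*y)) as [Hy|Hy].
    + rewrite cut_hi by auto. rewrite Rminus_diag, Rmult_0_r, Rabs_R0; auto.
    + rewrite Rabs_mult. assert (Rabs y < d / 2).
      { destruct (Rle_lt_dec (d/2) (Rabs y)); auto. exfalso.
        destruct (Rle_lt_dec 0 y) as [Hy0|Hy0].
        - rewrite Rabs_pos_eq in r by lra. nra.
        - rewrite Rabs_left in r by lra. nra. }
      rewrite (Rabs_pos_eq (1 - _)) by lra. pose proof (Rabs_pos y). nra.
  - exists (d/4). split; [lra|]. intros s Hs.
    assert (Hq : (s - s0) * (s - s0) <= d * d / 16).
    { destruct (Rle_lt_dec 0 (s - s0)) as [Hy0|Hy0].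
      - rewrite Rabs_pos_eq in Hs by lra. nra.
      - rewrite Rabs_left in Hs by lra. nra. }
    rewrite cut_lo by auto. ring.
Qed.

Lemma crv_ext (X : Frol) c c' : crv X c -> (forall s, c s = c' s) -> crv X c'.
Proof. intros H E. replace c' with c; auto. apply functional_extensionality; auto. Qed.

Lemma hep (X : PFrol) (A : car X -> Prop) (hA : A (bp X)) (HS : SNDR X A) (W : PFrol)
  (phi psi : car (PSub X A hA) -> car W) (Hp : phomotopic (PSub X A hA) W phi psi)
  (f : car X -> car W) (Hf : pmap X W f) (Hfa : forall a, f (proj1_sig a) = phi a) :
  exists f', pmap X W f' /\ (forall a, f' (proj1_sig a) = psi a) /\ htpy_eq X W f f'.
Proof.
  destruct HS as [u [Hu [Hu0 [H [HH [_ [H0 [HA H1]]]]]]]].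
  destruct Hp as [K [HK [K0 [K1 Kb]]]].
  destruct Hf as [Hfs Hfb].
  pose (v := fun x => proj1_sig (u x)).
  assert (Hv : forall x, 0 <= v x <= 1) by (intros x; exact (proj2_sig (u x))).
  pose (mu := fun z => 1 - cut (1/3) (2/3) z).
  pose (nu := fun z => 1 - cut (1/5) (1/4) z).
  assert (Fmu : flat mu) by (apply flat_cutc; lra).
  assert (Fnu : flat nu) by (apply flat_cutc; lra).
  assert (mu_r : forall z, 0 <= mu z <= 1) by (intros z; unfold mu; pose proof (cut_range (1/3) (2/3) z); lra).
  assert (nu_r : forall z, 0 <= nu z <= 1) by (intros z; unfold nu; pose proof (cut_range (1/5) (1/4) z); lra).
  assert (mu1 : forall z, z <= 1/3 -> mu z = 1) by (intros; unfold mu; rewrite cut_lo; lra).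
  assert (nu1 : forall z, z <= 1/5 -> nu z = 1) by (intros; unfold nu; rewrite cut_lo; lra).
  assert (nu0 : forall z, 1/4 <= z -> nu z = 0) by (intros; unfold nu; rewrite cut_hi; lra).
  assert (vA : forall x, A x -> v x = 0) by (intros; apply Hu0; auto).
  assert (HC : forall (tau : R -> R) (x : R -> car X), sm tau -> (forall s, 0 <= tau s <= 1) -> crv X x ->
            crv W (fun s => f (H (clampI (tau s), x s)))).
  { intros tau x Ht Hr Hx. apply (map_crv _ _ f _ Hfs). apply (map_crv _ _ H _ HH).
    apply crv_Prod. cbn [fst snd]. split; auto. apply crv_bI, crv_clamp; auto. }
  pose (rA := fun y : car X => match Rlt_dec (proj1_sig (u y)) 1 with
                | left h => exist A (H (i1, y)) (H1 y h) | right _ => bp (PSub X A hA) end).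
  assert (rA_val : forall y, v y < 1 -> proj1_sig (rA y) = H (i1, y)).
  { intros y Hy. unfold rA. destruct (Rlt_dec _ _); [reflexivity| unfold v in Hy; lra]. }
  pose (f1 := fun x => f (H (clampI (mu (v x)), x))).
  pose (F := fun p : car (Prod I X) => if Rlt_dec (v (snd p)) (1/3)
               then K (clampI (proj1_sig (fst p) * nu (v (snd p))), rA (snd p))
               else f1 (snd p)).
  assert (F0 : forall x, F (i0, x) = f1 x).
  { intros x. unfold F. cbn [fst snd]. destruct (Rlt_dec _ _) as [Hl|Hr]; [|reflexivity].
    rewrite (clamp_eq _ i0) by (simpl; ring). rewrite K0, <- Hfa, rA_val by lra.
    unfold f1. rewrite mu1 by lra. rewrite (clamp_eq 1 i1) by reflexivity. reflexivity. }
  assert (Fb : forall t, F (t, bp X) = bp W).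
  { intros t. unfold F. cbn [fst snd]. rewrite (vA _ hA). destruct (Rlt_dec _ _) as [Hl|Hr]; [|lra].
    replace (rA (bp X)) with (bp (PSub X A hA)). apply Kb.
    apply sig_eq. rewrite rA_val by (rewrite (vA _ hA); lra). simpl. rewrite HA; auto. }
  assert (FS : smooth_map (Prod I X) W F).
  { apply crv_map. intros c Hc. pose proof Hc as Hc'. apply crv_Prod in Hc' as [C1 C2].
    apply (proj2 (crv_sat W _)). intros h Hh. apply smooth_iff. apply sm_local. intros s0.
    pose (x := fun s => snd (c s)).
    assert (Sm1 : sm (fun s => 1 - cut 0.27 0.3 (v (x s)))).
    { apply (u_sm X u (fun z => 1 - cut 0.27 0.3 z) x Hu); auto. apply flat_cutc; lra. }
    assert (Sm2 : sm (fun s => cut 0.26 0.27 (v (x s)))).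
    { apply (u_sm X u (cut 0.26 0.27) x Hu); auto. apply flat_cut; lra. }
    destruct (Rle_lt_dec (v (x s0)) 0.27) as [Hle|Hlt].
    - destruct (sm_pos_nbhd _ s0 Sm1) as [d [Hd Hball]].
      { rewrite cut_lo by lra. lra. }
      assert (Vb : forall s, Rabs (s - s0) < d -> v (x s) < 0.3).
      { intros s Hs. specialize (Hball s Hs). destruct (Rlt_le_dec (v (x s)) 0.3); auto.
        rewrite cut_hi in Hball; lra. }
      destruct (reparam_exists s0 d Hd) as [sg [Ssg [Bsg [d' [Hd' Isg]]]]].
      exists (Rmin d d'). split; [apply Rmin_pos; auto|].
      exists (fun s => h (K (clampI (proj1_sig (fst (c (sg s))) * nu (v (x (sg s)))), rA (x (sg s))))).
      split.
      + apply (crv_fns W _ h); auto. apply (map_crv _ _ K _ HK). apply crv_Prod. cbn [fst snd]. split.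
        * apply crv_clamp.
          -- apply sm_mult. apply (sm_comp (fun s => proj1_sig (fst (c s))) sg); auto. apply crv_I; auto.
             apply (u_sm X u nu (fun s => x (sg s)) Hu); auto. apply crv_reparam; auto.
          -- intros s. pose proof (proj2_sig (fst (c (sg s)))) as Ht. simpl in Ht.
             apply prod01; auto.
        * apply crv_Sub. apply crv_ext with (fun s => H (i1, x (sg s))).
          -- apply (map_crv _ _ H _ HH). apply crv_Prod. cbn [fst snd]. split.
             apply crv_const. apply crv_reparam; auto.
          -- intros s. rewrite rA_val; auto. specialize (Vb (sg s) (Bsg s)). lra.
      + intros s Hs. rewrite Isg by (eapply Rlt_le_trans; [exact Hs| apply Rmin_r]).
        assert (Vs := Vb s ltac:(eapply Rlt_le_trans; [exact Hs| apply Rmin_l])).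
        unfold F. fold (x s). destruct (Rlt_dec _ _) as [Hl|Hr]; [reflexivity| unfold x in *; lra].
    - destruct (sm_pos_nbhd _ s0 Sm2) as [d [Hd Hball]].
      { rewrite cut_hi by lra. lra. }
      assert (Vb : forall s, Rabs (s - s0) < d -> 0.26 < v (x s)).
      { intros s Hs. specialize (Hball s Hs). destruct (Rlt_le_dec 0.26 (v (x s))); auto.
        rewrite cut_lo in Hball; lra. }
      exists d. split; auto.
      exists (fun s => h (f (H (clampI (mu (v (x s))), x s)))). split.
      + apply (crv_fns W _ h); auto. apply HC; auto.
        apply (u_sm X u mu x Hu); auto.
      + intros s Hs. specialize (Vb s Hs). unfold F. fold (x s).
        destruct (Rlt_dec _ _) as [Hl|Hr]; [|reflexivity].
        rewrite nu0 by lra. rewrite (clamp_eq _ i0) by (simpl; ring).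
        rewrite K0, <- Hfa, rA_val by lra. rewrite mu1 by lra.
        rewrite (clamp_eq 1 i1) by reflexivity. reflexivity. }
  exists (fun x => F (i1, x)). split; [split|split].
  - apply crv_map. intros c Hc. apply (map_crv _ _ F _ FS). apply crv_Prod. cbn [fst snd]. split; auto.
    apply crv_const.
  - apply Fb.
  - intros a. unfold F. cbn [fst snd]. rewrite (vA _ (proj2_sig a)).
    destruct (Rlt_dec _ _) as [Hl|Hr]; [|lra].
    rewrite nu1 by lra. rewrite (clamp_eq _ i1) by (simpl; ring).
    replace (rA (proj1_sig a)) with a. apply K1.
    apply sig_eq. rewrite rA_val by (rewrite (vA _ (proj2_sig a)); lra). rewrite HA; auto. apply proj2_sig.
  - apply rst_trans with f1.
    + apply rst_step.
      exists (fun p : car (Prod I X) => f (H (clampI (proj1_sig (fst p) * mu (v (snd p))), snd p))).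
      split; [|split; [|split]].
      * apply crv_map. intros c Hc. apply crv_Prod in Hc as [C1 C2]. apply HC; auto.
        -- apply sm_mult. apply crv_I; auto. apply (u_sm X u mu (fun s => snd (c s)) Hu); auto.
        -- intros s. pose proof (proj2_sig (fst (c s))) as Ht. simpl in Ht.
           apply prod01; auto.
      * intros x. cbn [fst snd]. rewrite (clamp_eq _ i0) by (simpl; ring). rewrite H0; reflexivity.
      * intros x. cbn [fst snd]. unfold f1.
        assert (E : proj1_sig i1 * mu (v x) = mu (v x)) by (simpl; ring). rewrite E. reflexivity.
      * intros t. cbn [fst snd]. rewrite HA by exact hA. exact Hfb.
    + apply rst_step. exists F. split; [exact FS|split; [exact F0|split; [reflexivity|exact Fb]]].
Qed.

Definition extQ (X : PFrol) A hA (W : PFrol) (phi psi : car (PSub X A hA) -> car W) :=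
  forall f, pmap X W f -> (forall a, f (proj1_sig a) = phi a) ->
  exists f', pmap X W f' /\ (forall a, f' (proj1_sig a) = psi a) /\ htpy_eq X W f f'.

Lemma ext_chain (X : PFrol) A hA (HS : SNDR X A) (W : PFrol) phi psi :
  htpy_eq (PSub X A hA) W phi psi -> extQ X A hA W phi psi /\ extQ X A hA W psi phi.
Proof.
  induction 1 as [phi psi Hs| phi | phi psi Hr IH | phi chi psi H1 IH1 H2 IH2].
  - split; intros f Hf Ha; eapply hep; eauto. apply phom_sym; auto.
  - split; intros f Hf Ha; exists f; repeat split; auto; try apply Hf; apply rst_refl.
  - tauto.
  - destruct IH1 as [A1 B1], IH2 as [A2 B2]. split.
    + intros f Hf Ha. destruct (A1 f Hf Ha) as [f1 [P1 [E1 T1]]].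
      destruct (A2 f1 P1 E1) as [f2 [P2 [E2 T2]]]. exists f2; repeat split; auto; try apply P2.
      eapply rst_trans; eauto.
    + intros f Hf Ha. destruct (B2 f Hf Ha) as [f1 [P1 [E1 T1]]].
      destruct (B1 f1 P1 E1) as [f2 [P2 [E2 T2]]]. exists f2; repeat split; auto; try apply P2.
      eapply rst_trans; eauto.
Qed.

Theorem lemma6 (X : PFrol) (A : car X -> Prop) (hA : A (bp X)) :
  SNDR X A ->
  forall (W : PFrol) (f : car X -> car W), pmap X W f ->
    ((exists g : car (PQuot X A) -> car W,
        pmap (PQuot X A) W g /\ htpy_eq X W (fun x => g (qproj A x)) f)
     <-> htpy_eq (PSub X A hA) W (fun a => f (proj1_sig a)) (fun _ => bp W)).
Proof.
  intros HS W f Hf. split.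
  - intros [g [[Hg Hgb] Ht]].
    apply rst_sym. 
    replace (fun _ : car (PSub X A hA) => bp W) with (fun a : car (PSub X A hA) => g (qproj A (proj1_sig a))).
    + exact (htpy_res X W A hA _ _ Ht).
    + apply functional_extensionality. intros [a Ha]. simpl. rewrite <- Hgb. f_equal.
      apply sig_eq. simpl. apply functional_extensionality. intros y. apply propositional_extensionality.
      unfold qcls. split.
      * intros [->|[_ Hy]]; right; auto.
      * intros [<-|[_ Hy]]; right; auto.
  - intros Ht. destruct (ext_chain X A hA HS W _ _ Ht) as [Q _].
    destruct (Q f Hf (fun a => eq_refl)) as [f' [Pf' [Ef' Tf']]].
    destruct (quot_factor X W A f' Pf') as [g [Pg Eg]].
    { intros x Ax. exact (Ef' (exist A x Ax)). }
    exists g. split; auto.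
    replace (fun x => g (qproj A x)) with f'.
    + apply rst_sym; auto.
    + apply functional_extensionality; intros; rewrite Eg; auto.
Qed.
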